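(* There exist universal constants $\delta_0 > 0$ and $c > 0$ such that if $\Omega \subset \mathbb{R}^2$ is convex, has area $1$ and satisfies $\mathcal{A}(\Omega) \leq \delta_0$, then $\Omega \subset B$ for some disk $B$ with $$ |B| \leq 1 + c \cdot \mathcal{A}(\Omega)^{1/2}.$$
   Context: The Fraenkel asymmetry of $\Omega$ is $\mathcal{A}(\Omega) = \inf_{B} |B \,\Delta\, \Omega| / |\Omega|$, where the infimum is over all disks $B \subset \mathbb{R}^2$ with $|B| = |\Omega|$ and $B \,\Delta\, \Omega = (B\setminus\Omega)\cup(\Omega\setminus B)$ is the symmetric difference. *)

(* Defs.v *)
From HB Require Import structures.
From mathcomp Require Import all_boot all_order all_algebra.
From mathcomp Require Import all_classical all_reals all_analysis.
Set Implicit Arguments. Unset Strict Implicit. Unset Printing Implicit Defensive.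
Import Order.TTheory GRing.Theory Num.Theory.
Local Open Scope classical_set_scope.
Local Open Scope ring_scope.

(* On Lebesgue-measurable
   sets (in particular on convex sets, and on symmetric differences of convex
   sets with disks) it coincides with the area. *)
Definition area {R : realType} (A : set (R * R)) : \bar R :=
  mu_ext ((@lebesgue_measure R) \x (@lebesgue_measure R))%E A.

Definition convex2 {R : realType} (O : set (R * R)) : Prop :=
  forall p q : R * R, O p -> O q -> forall t : R, 0 <= t <= 1 ->
    O (t * p.1 + (1 - t) * q.1, t * p.2 + (1 - t) * q.2).

Definition disk {R : realType} (a b r : R) : set (R * R) :=
  [set p | (p.1 - a) ^+ 2 + (p.2 - b) ^+ 2 <= r ^+ 2].

Definition is_disk {R : realType} (B : set (R * R)) : Prop :=
  exists a b r : R, 0 < r /\ B = disk a b r.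

(* Fraenkel asymmetry: inf over disks B with |B| = |O| of |B Δ O| / |O|
   (meaningful when 0 < |O| < +oo; `+` is the symmetric difference). *)
Definition fraenkel {R : realType} (O : set (R * R)) : \bar R :=
  ereal_inf [set (area (B `+` O) * ((fine (area O))^-1)%:E)%E
            | B in [set B | is_disk B /\ area B = area O]].

(* Main.v *)
Require Import Defs.
From HB Require Import structures.
From mathcomp Require Import all_boot all_order all_algebra.
From mathcomp Require Import all_classical all_reals all_analysis.
From mathcomp Require Import measurable_realfun.
From mathcomp Require Import ring lra.
Import Order.TTheory GRing.Theory Num.Theory.
Local Open Scope classical_set_scope.
Local Open Scope ring_scope.
Section S.
Context {R : realType}.
Local Notation leb := (@lebesgue_measure R).

Lemma meas_aff1 (a k : R) : measurable_fun setT (fun x : R => a + k * x).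
Proof.
apply: measurable_funD => //; exact: measurable_funM.
Qed.

Lemma leb_aff (a k : R) (A : set R) : 0 < k -> measurable A ->
  leb [set x | A (a + k * x)] = ((k^-1)%:E * leb A)%E.
Proof.
move=> k0 mA.
pose f := (fun x : R => a + k * x) : _ -> measurableTypeR R.
pose kk : {nonneg R} := NngNum (ltW k0).
have H := @lebesgue_measure_unique R (mscale kk (pushforward leb f)).
have {H} := H (meas_aff1 a k).
move=> H.
have E : leb A = (k%:E * leb [set x | A (a + k * x)%R])%E.
  apply: H => // X /ocitvP [->|[[x y] /= xy ->]].
    by rewrite !measure0.
  rewrite /mscale /pushforward /=.
  change (leb `]x, y] = k%:E * leb (f @^-1` `]x, y]))%E.
  have -> : f @^-1` `]x, y] = `](((x - a) / k)%R), (((y - a) / k)%R)]%classic.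
    apply/seteqP; split => z; rewrite /f /= !in_itv /=.
      move=> /andP[h1 h2]; apply/andP; split.
        by rewrite ltr_pdivrMr // ltrBlDl mulrC.
      by rewrite ler_pdivlMr // lerBrDl mulrC.
    move=> /andP[h1 h2]; apply/andP; split.
      by move: h1; rewrite ltr_pdivrMr // ltrBlDl mulrC.
    by move: h2; rewrite ler_pdivlMr // lerBrDl mulrC.
  rewrite !lebesgue_measure_itv /= !lte_fin xy ltr_pM2r ?invr_gt0 ?ltrD2r //.
  rewrite xy -!EFinD -EFinM; congr EFin.
  field; lra.
rewrite E muleA -EFinM mulVf ?gt_eqF // mul1e.
by [].
Qed.
Local Notation m2 := ((@lebesgue_measure R) \x (@lebesgue_measure R))%E.

Local Notation MT := (measurableTypeR R * measurableTypeR R)%type.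
Definition aff (a1 a2 k : R) (p : MT) : MT := (a1 + k * p.1, a2 + k * p.2).

Lemma meas_aff (a1 a2 k : R) : measurable_fun setT (aff a1 a2 k).
Proof.
apply: measurable_fun_pair.
  exact: (measurableT_comp (meas_aff1 a1 k) measurable_fst).
exact: (measurableT_comp (meas_aff1 a2 k) measurable_snd).
Qed.

Lemma m2_aff (a1 a2 k : R) (X : set (R * R)) : 0 < k -> measurable X ->
  m2 (aff a1 a2 k @^-1` X) = ((k ^- 2)%:E * m2 X)%E.
Proof.
move=> k0 mX.
have k20 : 0 < k ^+ 2 by rewrite exprn_gt0.
pose kk : {nonneg R} := NngNum (ltW k20).
have H := @product_measure_unique _ _ _ _ R leb leb (mscale kk (pushforward m2 (aff a1 a2 k : MT -> MT))).
have {H} := H (meas_aff a1 a2 k).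
move=> H.
have E : m2 X = ((k ^+ 2)%:E * m2 (aff a1 a2 k @^-1` X))%E.
  apply: H => // A B mA mB.
  change ((k ^+ 2)%:E * m2 (aff a1 a2 k @^-1` (A `*` B)) = leb A * leb B)%E.
  have -> : aff a1 a2 k @^-1` (A `*` B) =
     [set x | A (a1 + k * x)%R] `*` [set x | B (a2 + k * x)%R] by [].
  rewrite product_measure1E; last 2 first.
    - by rewrite -[X in measurable X]setTI; exact: (meas_aff1 a1 k).
    - by rewrite -[X in measurable X]setTI; exact: (meas_aff1 a2 k).
  have h1 := @leb_aff a1 k A k0 mA; have h2 := @leb_aff a2 k B k0 mB.
  transitivity ((k^+2)%:E * (((k^-1)%:E * leb A) * ((k^-1)%:E * leb B)))%E; first by rewrite -h1 -h2.
  rewrite muleACA muleA -!EFinM.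
  rewrite !muleA -EFinM.
  have -> : k ^+ 2 * (k^-1 / k) = 1 by field; lra.
  by rewrite mul1e.
rewrite E muleA -EFinM mulVf ?gt_eqF // mul1e.
by [].
Qed.

Lemma area_aff_le (a1 a2 k : R) (X : set (R * R)) : 0 < k ->
  ((k ^+ 2)%:E * area (aff a1 a2 k @^-1` X) <= area X)%E.
Proof.
move=> k0.
rewrite /area /mu_ext.
apply: le_ereal_inf_tmp => _ [F [mF XF] <-].
have mG i : measurable (aff a1 a2 k @^-1` F i).
  by rewrite -[X in measurable X]setTI; exact: (meas_aff a1 a2 k).
have cG : measurable_cover (aff a1 a2 k @^-1` X) (fun i => aff a1 a2 k @^-1` F i).
  split => // p /XF [i _ Fi]; by exists i.
have h : (ereal_inf [set \sum_(i <oo) m2 (A i) | A in measurable_cover (aff a1 a2 k @^-1` X)]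
   <= \sum_(i <oo) m2 (aff a1 a2 k @^-1` F i))%E.
  by apply: ereal_inf_lbound; exists (fun i => aff a1 a2 k @^-1` F i).
have k2 : (0 <= (k ^+ 2)%:E)%E by rewrite lee_fin exprn_ge0 ?ltW.
move: h => /(lee_wpmul2l k2) /le_trans; apply.
rewrite -nneseriesZl; last by move=> i _; exact: measure_ge0.
apply: lee_nneseries => [i _ _|i _]; first by apply: mule_ge0; [exact: k2|exact: measure_ge0].
rewrite (@m2_aff a1 a2 k (F i) k0 (mF i)) muleA -EFinM mulfV ?gt_eqF ?exprn_gt0 // mul1e.
by [].
Qed.

Lemma area_aff (a1 a2 k : R) (X : set (R * R)) : 0 < k ->
  area (aff a1 a2 k @^-1` X) = ((k ^- 2)%:E * area X)%E.
Proof.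
move=> k0.
have ki0 : 0 < k^-1 by rewrite invr_gt0.
have h1 := @area_aff_le a1 a2 k X k0.
have h2 := @area_aff_le (- a1 / k) (- a2 / k) (k^-1) (aff a1 a2 k @^-1` X) ki0.
have E : aff (- a1 / k) (- a2 / k) k^-1 @^-1` (aff a1 a2 k @^-1` X) = X.
  apply/seteqP; split => -[x y]; rewrite /aff /= => H.
    by move: H; congr X; congr pair; field; lra.
  by move: H; congr X; congr pair; field; lra.
rewrite E in h2.
apply/le_anti/andP; split; last by rewrite -exprVn.
have kk : (0 <= (k ^- 2)%:E)%E by rewrite lee_fin invr_ge0 exprn_ge0 ?ltW.
move: h1 => /(lee_wpmul2l kk); rewrite muleA -EFinM mulVf ?mul1e //.
by rewrite gt_eqF // exprn_gt0.
Qed.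
End S.
Section S2.
Context {R : realType}.
Local Notation A1 := (area (disk 0 0 1 : set (R * R))).

Lemma disk_aff (a b r : R) : 0 < r ->
  disk a b r = aff (- a / r) (- b / r) r^-1 @^-1` (disk 0 0 1).
Proof.
move=> r0; apply/seteqP; split => -[x y]; rewrite /disk /aff /=.
  move=> H.
  have -> : (- a / r + r^-1 * x - 0) ^+ 2 + (- b / r + r^-1 * y - 0) ^+ 2
     = ((x - a) ^+ 2 + (y - b) ^+ 2) / r ^+ 2 by field; lra.
  by rewrite expr1n ler_pdivrMr ?exprn_gt0 // mul1r.
have -> : (- a / r + r^-1 * x - 0) ^+ 2 + (- b / r + r^-1 * y - 0) ^+ 2
   = ((x - a) ^+ 2 + (y - b) ^+ 2) / r ^+ 2 by field; lra.
by rewrite expr1n ler_pdivrMr ?exprn_gt0 // mul1r.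
Qed.

Lemma area_disk (a b r : R) : 0 < r ->
  area (disk a b r) = ((r ^+ 2)%:E * A1)%E.
Proof.
move=> r0; rewrite (@disk_aff a b r r0) area_aff ?invr_gt0 //.
by rewrite -exprVn invrK.
Qed.
End S2.
Section R1.
Context {R : realType}.

Lemma cs2 (u1 u2 w1 w2 : R) :
  (u1 * w1 + u2 * w2) ^+ 2 <= (u1 ^+ 2 + u2 ^+ 2) * (w1 ^+ 2 + w2 ^+ 2).
Proof.
have h : 0 <= (u1 * w2 - u2 * w1) ^+ 2 by apply: sqr_ge0.
nra.
Qed.

Lemma cs_unit (u1 u2 w1 w2 s : R) : u1 ^+ 2 + u2 ^+ 2 = 1 ->
  w1 ^+ 2 + w2 ^+ 2 <= s ^+ 2 -> 0 <= s ->
  - s <= u1 * w1 + u2 * w2 <= s.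
Proof.
move=> hu hw s0.
have := cs2 u1 u2 w1 w2; rewrite hu mul1r => h.
have h2 : (u1 * w1 + u2 * w2) ^+ 2 <= s ^+ 2 by lra.
apply/andP; split; nra.
Qed.

Lemma RL (r t L s e : R) : 0 < r -> 0 < t -> 0 <= L -> L * (2 * t + r) = t ->
  L ^+ 2 * s <= e -> 1 / 16 <= s + e -> 0 <= e -> e <= 1 / 300 ->
  t ^+ 2 <= 288 * r ^+ 2 * e.
Proof.
move=> r0 t0 L0 hL h1 h2 e0 e1.
have s1 : 1 / 32 <= s by lra.
have hL2 : L ^+ 2 <= 32 * e by nra.
have L3 : L < 1 / 3 by nra.
have tr : t < r by nra.
have t3 : t <= 3 * r * L by nra.
have : t ^+ 2 <= 9 * r ^+ 2 * L ^+ 2 by nra.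
nra.
Qed.
End R1.
Section S3.
Context {R : realType}.
Lemma area_le (A B : set (R * R)) : A `<=` B -> (area A <= area B)%E.
Proof. by move=> AB; apply: le_mu_ext. Qed.
Lemma area_ge0 (A : set (R * R)) : (0 <= area A)%E.
Proof. by apply: mu_ext_ge0 => X; apply: measure_ge0. Qed.
Lemma area_U2 (A B : set (R * R)) : (area (A `|` B) <= area A + area B)%E.
Proof. rewrite /area. exact: outer_measureU2. Qed.
End S3.
Section S4.
Context {R : realType}.
Local Notation A1 := (area (disk 0 0 1 : set (R * R))).

Lemma ML (O : set (R * R)) (a b r e T : R) :
  convex2 O -> 0 < r -> area (disk a b r) = 1%E ->
  (area (disk a b r `+` O) <= e%:E)%E -> 0 <= e -> e <= 1 / 300 ->
  0 <= T -> 288 * r ^+ 2 * e <= T ^+ 2 ->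
  forall p, O p -> (p.1 - a) ^+ 2 + (p.2 - b) ^+ 2 <= (r + T) ^+ 2.
Proof.
move=> cO r0 aB aY e0 e1 T0 hT [p1 p2] Op /=.
set d2 := (p1 - a) ^+ 2 + (p2 - b) ^+ 2.
have [hd|hd] := leP d2 (r ^+ 2).
  by apply: le_trans hd _; nra.
have d20 : 0 <= d2 by rewrite /d2 addr_ge0 ?sqr_ge0.
set d := Num.sqrt d2.
have dd : d ^+ 2 = d2 by rewrite sqr_sqrtr.
have d0 : 0 <= d := sqrtr_ge0 _.
have rd : r < d by nra.
have dpos : 0 < d by apply: lt_trans rd.
set t := d - r.
have t0 : 0 < t by rewrite subr_gt0.
set u1 := (p1 - a) / d; set u2 := (p2 - b) / d.
have hu : u1 ^+ 2 + u2 ^+ 2 = 1.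
  have -> : u1 ^+ 2 + u2 ^+ 2 = d2 / d ^+ 2.
    by rewrite /u1 /u2 /d2; field; rewrite gt_eqF.
  have d2p : 0 < d2 by apply: lt_trans hd; exact: exprn_gt0.
  by rewrite dd divff // gt_eqF.
have pu1 : p1 - a = d * u1 by rewrite /u1 mulrC divfK // gt_eqF.
have pu2 : p2 - b = d * u2 by rewrite /u2 mulrC divfK // gt_eqF.
set c1 := a + 3 * r / 4 * u1; set c2 := b + 3 * r / 4 * u2.
set D := disk c1 c2 (r / 4).
have A1E : A1 = (r ^- 2)%:E.
  move: aB; rewrite area_disk // => h.
  have : ((r ^- 2)%:E * ((r ^+ 2)%:E * A1) = (r ^- 2)%:E * 1)%E by rewrite h.
  by rewrite muleA -EFinM mulVf ?mul1e ?mule1 // gt_eqF // exprn_gt0.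
have aD : area D = (1 / 16)%:E.
  by rewrite area_disk ?divr_gt0 // A1E -EFinM; congr EFin; field; rewrite gt_eqF.
have DB : D `<=` disk a b r.
  move=> [x1 x2]; rewrite /D /disk /= => hx.
  have hr4 : 0 <= r / 4 by rewrite divr_ge0 // ltW.
  have /andP[cs1 cs2'] := cs_unit _ _ _ _ _ hu hx hr4.
  have -> : x1 - a = 3 * r / 4 * u1 + (x1 - c1) by rewrite /c1; ring.
  have -> : x2 - b = 3 * r / 4 * u2 + (x2 - c2) by rewrite /c2; ring.
  nra.
set L := t / (2 * t + r).
have den : 0 < 2 * t + r by lra.
have L0 : 0 < L by rewrite /L divr_gt0.
have hL : L * (2 * t + r) = t by rewrite /L divfK // gt_eqF.
have L1 : L <= 1 by nra.
set H := aff (p1 - p1 / L) (p2 - p2 / L) L^-1 @^-1` (D `&` O).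
have aH : area H = ((L ^+ 2)%:E * area (D `&` O))%E.
  by rewrite /H area_aff ?invr_gt0 // exprVn invrK.
have HY : H `<=` disk a b r `+` O.
  move=> [y1 y2]; rewrite /H /aff /= => -[hxD hxO].
  set x1 := p1 - p1 / L + L^-1 * y1 in hxD hxO.
  set x2 := p2 - p2 / L + L^-1 * y2 in hxD hxO.
  have ey1 : L * x1 + (1 - L) * p1 = y1 by rewrite /x1; field; rewrite gt_eqF.
  have ey2 : L * x2 + (1 - L) * p2 = y2 by rewrite /x2; field; rewrite gt_eqF.
  right; split.
    have := cO _ _ hxO Op L; rewrite /= ey1 ey2; apply.
    by rewrite (ltW L0) L1.
  rewrite /disk /= => hy.
  move: hxD; rewrite /D /disk /= => hx.
  have hr4 : 0 <= r / 4 by rewrite divr_ge0 // ltW.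
  have /andP[cs1 cs2'] := cs_unit _ _ _ _ _ hu hx hr4.
  have z1 : y1 - a = L * (3 * r / 4 * u1 + (x1 - c1)) + (1 - L) * (d * u1).
    by rewrite -pu1 -ey1 /c1; ring.
  have z2 : y2 - b = L * (3 * r / 4 * u2 + (x2 - c2)) + (1 - L) * (d * u2).
    by rewrite -pu2 -ey2 /c2; ring.
  have zu : (y1 - a) * u1 + (y2 - b) * u2 =
      L * (3 * r / 4 + (u1 * (x1 - c1) + u2 * (x2 - c2))) + (1 - L) * d.
    rewrite z1 z2.
    have -> : L * (3 * r / 4 + (u1 * (x1 - c1) + u2 * (x2 - c2))) + (1 - L) * d
      = L * (3 * r / 4 * 1 + (u1 * (x1 - c1) + u2 * (x2 - c2))) + (1 - L) * (d * 1)
      by rewrite !mulr1.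
    rewrite -hu; ring.
  have zu2 : r + t / 2 <= (y1 - a) * u1 + (y2 - b) * u2.
    rewrite zu.
    have e3 : d = r + t by rewrite /t; ring.
    rewrite e3; nra.
  have := cs2 (y1 - a) (y2 - b) u1 u2; rewrite hu mulr1 => hcs.
  nra.
have aHY : ((L ^+ 2)%:E * area (D `&` O) <= e%:E)%E.
  by rewrite -aH; apply: le_trans aY; apply: area_le.
have DU : D `<=` (D `&` O) `|` (disk a b r `+` O).
  move=> x Dx; have [Ox|nOx] := pselect (O x).
    by left.
  by right; left; split => //; apply: DB.
have aDU : ((1 / 16)%:E <= area (D `&` O) + e%:E)%E.
  rewrite -aD; apply: (le_trans (area_le _ _ DU)).
  apply: (le_trans (area_U2 _ _)).
  exact: leeD2l.
have aDO0 := area_ge0 (D `&` O).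
have aDO1 : (area (D `&` O) <= (1 / 16)%:E)%E by rewrite -aD; apply: area_le => x [].
have fDO : area (D `&` O) \is a fin_num.
  by rewrite ge0_fin_numE // (le_lt_trans aDO1) // ltry.
set s := fine (area (D `&` O)).
have sE : area (D `&` O) = s%:E by rewrite fineK.
rewrite sE -EFinM lee_fin in aHY.
rewrite sE -EFinD lee_fin in aDU.
have ht := RL _ _ _ _ _ r0 t0 (ltW L0) hL aHY aDU e0 e1.
have tT : t <= T by nra.
have e3 : d = r + t by rewrite /t; ring.
rewrite -dd e3; nra.
Qed.
End S4.
Section S5.
Context {R : realType}.
Local Notation A1 := (area (disk 0 0 1 : set (R * R))).

Lemma A1E (a b r : R) : 0 < r -> area (disk a b r) = 1%E -> A1 = (r ^- 2)%:E.
Proof.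
move=> r0 aB.
move: aB; rewrite area_disk // => h.
have : ((r ^- 2)%:E * ((r ^+ 2)%:E * A1) = (r ^- 2)%:E * 1)%E by rewrite h.
by rewrite muleA -EFinM mulVf ?mul1e ?mule1 // gt_eqF // exprn_gt0.
Qed.

Lemma fraenkel_ge0 (O : set (R * R)) : area O = 1%E -> (0 <= fraenkel O)%E.
Proof.
move=> aO; apply: le_ereal_inf_tmp => _ [B _ <-].
by rewrite aO /= invr1 mule1 area_ge0.
Qed.

Lemma pick (O : set (R * R)) (dl eps : R) : area O = 1%E ->
  fraenkel O = dl%:E -> 0 < eps ->
  exists a b r, [/\ 0 < r, area (disk a b r) = 1%E &
     (area (disk a b r `+` O) <= (dl + eps)%:E)%E].
Proof.
move=> aO fE e0.
have : fraenkel O \is a fin_num by rewrite fE.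
move=> /(lb_ereal_inf_adherent e0) [x [B [[a [b [r [r0 BE]]]] aB]] xE] h.
have h2 : (x < fraenkel O + eps%:E)%E := h.
rewrite -xE aO /= invr1 mule1 in h2.
exists a, b, r; split => //.
  by rewrite -BE aB.
by rewrite EFinD -fE -BE; apply: ltW.
Qed.
End S5.
Section R2.
Context {R : realType}.
Lemma RL2 (z1 z2 s1 s2 rho sg T : R) : 0 < rho -> 0 < sg -> sg <= rho ->
  T * (12 * rho) = sg ^+ 2 -> z1 ^+ 2 + z2 ^+ 2 <= (rho + T) ^+ 2 ->
  - sg <= s1 <= sg -> - sg <= s2 <= sg ->
  (z1 + s1) ^+ 2 + (z2 + s2) ^+ 2 <= rho ^+ 2 + 11 * rho * sg.
Proof.
move=> r0 s0 sr hT hz /andP[a1 a2] /andP[b1 b2].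
have T0 : 0 <= T by nra.
have Ts : T <= sg / 12 by nra.
have z1b : z1 <= rho + T by nra.
have z1b' : - (rho + T) <= z1 by nra.
have z2b : z2 <= rho + T by nra.
have z2b' : - (rho + T) <= z2 by nra.
have c1 : z1 * s1 <= (rho + T) * sg by nra.
have c2 : z2 * s2 <= (rho + T) * sg by nra.
have q1 : s1 ^+ 2 <= sg ^+ 2 by nra.
have q2 : s2 ^+ 2 <= sg ^+ 2 by nra.
nra.
Qed.
End R2.
Section S6.
Context {R : realType}.
Local Notation A1 := (area (disk 0 0 1 : set (R * R))).

Definition Kset (O : set (R * R)) (rho sg : R) (q : R * R) :=
  forall p, O p -> (p.1 - q.1) ^+ 2 + (p.2 - q.2) ^+ 2 <= (rho + sg ^+ 2 / (12 * rho)) ^+ 2.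

Lemma rad_unique (a b r rho : R) : 0 < r -> 0 < rho -> A1 = (rho ^- 2)%:E ->
  area (disk a b r) = 1%E -> r = rho.
Proof.
move=> r0 rho0 hA aB.
have := A1E a b r r0 aB; rewrite hA => -[] /invr_inj h.
apply/le_anti/andP; split; nra.
Qed.

Lemma K1 (O : set (R * R)) (rho sg : R) : convex2 O -> area O = 1%E ->
  fraenkel O = 0%:E -> 0 < rho -> A1 = (rho ^- 2)%:E -> 0 < sg -> sg <= rho ->
  exists q, Kset O rho sg q.
Proof.
move=> cO aO fO rho0 hA sg0 sgr.
set T := sg ^+ 2 / (12 * rho).
have hT : T * (12 * rho) = sg ^+ 2 by rewrite /T divfK // gt_eqF // mulr_gt0.
have T0 : 0 < T by rewrite /T divr_gt0 ?exprn_gt0 ?mulr_gt0.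
set eps := T ^+ 2 / (288 * rho ^+ 2).
have rr0 : 0 < 288 * rho ^+ 2 by rewrite mulr_gt0 ?exprn_gt0.
have hE : eps * (288 * rho ^+ 2) = T ^+ 2 by rewrite /eps divfK // gt_eqF.
have e0 : 0 < eps by rewrite /eps divr_gt0 ?exprn_gt0.
have [a [b [r [r0 aB aY]]]] := pick O 0 eps aO fO e0.
have rE := rad_unique a b r rho r0 rho0 hA aB; subst r.
rewrite add0r in aY.
have T12 : 12 * T <= rho by nra.
have e1 : eps <= 1 / 300 by nra.
exists (a, b) => p Op.
have hT2 : 288 * rho ^+ 2 * eps <= T ^+ 2 by rewrite mulrC hE.
exact: (ML O a b rho eps T cO rho0 aB aY (ltW e0) e1 (ltW T0) hT2 p Op).
Qed.

Lemma Kmono (O : set (R * R)) (rho s s' : R) (q : R * R) : Kset O rho s q ->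
  0 < rho -> 0 <= s -> s <= s' -> Kset O rho s' q.
Proof.
move=> Kq rho0 s0 ss p Op; apply: le_trans (Kq p Op) _.
have i0 : 0 <= (12 * rho)^-1 by rewrite invr_ge0 mulr_ge0 // ltW.
have ab : s ^+ 2 / (12 * rho) <= s' ^+ 2 / (12 * rho).
  by apply: ler_wpM2r => //; nra.
have a0 : 0 <= s ^+ 2 / (12 * rho) by rewrite mulr_ge0 // sqr_ge0.
nra.
Qed.

Lemma K2 (O : set (R * R)) (rho sg : R) (q q' : R * R) : area O = 1%E ->
  0 < rho -> A1 = (rho ^- 2)%:E -> 0 < sg -> sg <= rho ->
  Kset O rho sg q -> Kset O rho sg q' ->
  (q.1 - q'.1) ^+ 2 + (q.2 - q'.2) ^+ 2 <= sg ^+ 2.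
Proof.
move=> aO rho0 hA sg0 sgr Kq Kq'.
rewrite leNgt; apply/negP => hD.
set D := (q.1 - q'.1) ^+ 2 + (q.2 - q'.2) ^+ 2 in hD.
set T := sg ^+ 2 / (12 * rho).
have hT : T * (12 * rho) = sg ^+ 2 by rewrite /T divfK // gt_eqF // mulr_gt0.
have T0 : 0 < T by rewrite /T divr_gt0 ?exprn_gt0 ?mulr_gt0.
have T12 : 12 * T <= rho by nra.
set s0 := (rho + T) ^+ 2 - D / 4.
have s0r : s0 < rho ^+ 2 by rewrite /s0; nra.
set s' := Num.max s0 (rho ^+ 2 / 2).
have s'p : 0 < s'.
  apply: (@lt_le_trans _ _ (rho ^+ 2 / 2)); first by rewrite divr_gt0 ?exprn_gt0.
  by rewrite /s' le_max lexx orbT.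
have s'r : s' < rho ^+ 2.
  rewrite /s' gt_max s0r /=; nra.
have s0s : s0 <= s' by rewrite /s' le_max lexx.
set rr := Num.sqrt s'.
have rr0 : 0 < rr by rewrite sqrtr_gt0.
have rr2 : rr ^+ 2 = s' by rewrite sqr_sqrtr // ltW.
set m1 := (q.1 + q'.1) / 2; set m2 := (q.2 + q'.2) / 2.
have sub : O `<=` disk m1 m2 rr.
  move=> p Op; have h1 := Kq p Op; have h2 := Kq' p Op.
  rewrite /disk /= rr2.
  have -> : (p.1 - m1) ^+ 2 + (p.2 - m2) ^+ 2 =
    (((p.1 - q.1) ^+ 2 + (p.2 - q.2) ^+ 2) + ((p.1 - q'.1) ^+ 2 + (p.2 - q'.2) ^+ 2)) / 2
      - D / 4 by rewrite /m1 /m2 /D; field.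
  rewrite -/T in h1 h2.
  rewrite /s0 in s0s; lra.
have := area_le _ _ sub; rewrite aO area_disk // hA -EFinM lee_fin rr2 => h.
have : rho ^+ 2 <= s'.
  move: h; rewrite -[s' * _]/(s' / rho ^+ 2) ler_pdivlMr ?exprn_gt0 // mul1r.
  by [].
lra.
Qed.

Lemma PB (O : set (R * R)) (rho s s' : R) (q q' : R * R) : area O = 1%E ->
  0 < rho -> A1 = (rho ^- 2)%:E -> 0 < s -> s <= rho -> 0 < s' -> s' <= rho ->
  Kset O rho s q -> Kset O rho s' q' ->
  q'.1 - s' <= q.1 + s /\ q'.2 - s' <= q.2 + s.
Proof.
move=> aO rho0 hA s0 sr s'0 s'r Kq Kq'.
have [m [m0 ms hm]] : exists m, [/\ 0 < m, m <= s + s' &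
    (q.1 - q'.1) ^+ 2 + (q.2 - q'.2) ^+ 2 <= m ^+ 2].
  have [h|h] := leP s s'.
    exists s'; split => //; first lra.
    apply: (K2 _ _ _ _ _ aO rho0 hA s'0 s'r) => //.
    exact: (Kmono _ _ _ _ _ Kq rho0 (ltW s0) h).
  exists s; split => //; first lra.
  apply: (K2 _ _ _ _ _ aO rho0 hA s0 sr) => //.
  exact: (Kmono _ _ _ _ _ Kq' rho0 (ltW s'0) (ltW h)).
have z1 := sqr_ge0 (q.1 - q'.1); have z2 := sqr_ge0 (q.2 - q'.2).
have h1 : (q.1 - q'.1) ^+ 2 <= m ^+ 2 by lra.
have h2 : (q.2 - q'.2) ^+ 2 <= m ^+ 2 by lra.
have g1 : q'.1 - q.1 <= m by nra.
have g2 : q'.2 - q.2 <= m by nra.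
split; lra.
Qed.

Lemma Zcase (O : set (R * R)) : convex2 O -> area O = 1%E -> fraenkel O = 0%:E ->
  exists a b r, [/\ 0 < r, O `<=` disk a b r & area (disk a b r) = 1%E].
Proof.
move=> cO aO fO.
have [a0 [b0 [rho [rho0 aB0 _]]]] := pick O 0 1 aO fO ltr01.
have hA := A1E a0 b0 rho rho0 aB0.
have [q0 Kq0] := K1 O rho rho cO aO fO rho0 hA rho0 (lexx rho).
pose X1 := [set x : R | exists sg q, [/\ 0 < sg, sg <= rho, Kset O rho sg q & x = q.1 - sg]].
pose X2 := [set x : R | exists sg q, [/\ 0 < sg, sg <= rho, Kset O rho sg q & x = q.2 - sg]].
have X1n : X1 !=set0 by exists (q0.1 - rho), rho, q0.
have X2n : X2 !=set0 by exists (q0.2 - rho), rho, q0.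
have X1u : has_ubound X1.
  exists (q0.1 + rho) => x [sg [q [sg0 sgr Kq ->]]].
  by have [h _] := PB O rho rho sg q0 q aO rho0 hA rho0 (lexx _) sg0 sgr Kq0 Kq.
have X2u : has_ubound X2.
  exists (q0.2 + rho) => x [sg [q [sg0 sgr Kq ->]]].
  by have [_ h] := PB O rho rho sg q0 q aO rho0 hA rho0 (lexx _) sg0 sgr Kq0 Kq.
set xs := sup X1; set ys := sup X2.
have xsb sg q : 0 < sg -> sg <= rho -> Kset O rho sg q ->
    q.1 - sg <= xs /\ xs <= q.1 + sg.
  move=> sg0 sgr Kq; split.
    by apply: (ub_le_sup X1u); exists sg, q.
  apply: (ge_sup X1n) => x [sg' [q' [s0 sr Kq' ->]]].
  by have [h _] := PB O rho sg sg' q q' aO rho0 hA sg0 sgr s0 sr Kq Kq'.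
have ysb sg q : 0 < sg -> sg <= rho -> Kset O rho sg q ->
    q.2 - sg <= ys /\ ys <= q.2 + sg.
  move=> sg0 sgr Kq; split.
    by apply: (ub_le_sup X2u); exists sg, q.
  apply: (ge_sup X2n) => x [sg' [q' [s0 sr Kq' ->]]].
  by have [_ h] := PB O rho sg sg' q q' aO rho0 hA sg0 sgr s0 sr Kq Kq'.
exists xs, ys, rho; split => //; last first.
  by rewrite area_disk // hA -EFinM mulfV // gt_eqF // exprn_gt0.
move=> p Op; rewrite /disk /=.
apply/ler_addgt0Pr => eps e0.
have den : 0 < eps + 11 * rho ^+ 2 by rewrite addr_gt0 // mulr_gt0 // exprn_gt0.
set sg := rho * eps / (eps + 11 * rho ^+ 2).
have hs : sg * (eps + 11 * rho ^+ 2) = rho * eps by rewrite /sg divfK // gt_eqF.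
have sg0 : 0 < sg by rewrite /sg divr_gt0 // mulr_gt0.
have sgr : sg <= rho by nra.
have [q Kq] := K1 O rho sg cO aO fO rho0 hA sg0 sgr.
have [x1 x2] := xsb sg q sg0 sgr Kq.
have [y1 y2] := ysb sg q sg0 sgr Kq.
have hp := Kq p Op.
set T := sg ^+ 2 / (12 * rho) in hp.
have hT : T * (12 * rho) = sg ^+ 2 by rewrite /T divfK // gt_eqF // mulr_gt0.
have b1 : - sg <= q.1 - xs <= sg by apply/andP; split; lra.
have b2 : - sg <= q.2 - ys <= sg by apply/andP; split; lra.
have := RL2 (p.1 - q.1) (p.2 - q.2) (q.1 - xs) (q.2 - ys) rho sg T
  rho0 sg0 sgr hT hp b1 b2.
have -> : p.1 - q.1 + (q.1 - xs) = p.1 - xs by ring.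
have -> : p.2 - q.2 + (q.2 - ys) = p.2 - ys by ring.
have : 11 * rho * sg <= eps by nra.
lra.
Qed.
End S6.

Theorem lemma4 (R : realType) :
  exists delta0 c : R, 0 < delta0 /\ 0 < c /\
    forall O : set (R * R),
      convex2 O -> area O = 1%E -> (fraenkel O <= delta0%:E)%E ->
      exists B : set (R * R), is_disk B /\ O `<=` B /\
        (area B <= (1 + c * Num.sqrt (fine (fraenkel O)))%:E)%E.
Proof.
exists (1 / 600), 624; split; first by lra.
split; first by lra.
move=> O cO aO hF.
have F0 := fraenkel_ge0 O aO.
have fF : fraenkel O \is a fin_num.
  by rewrite ge0_fin_numE // (le_lt_trans hF) // ltry.
set dl := fine (fraenkel O).
have fE : fraenkel O = dl%:E by rewrite /dl fineK.
have dl0 : 0 <= dl by rewrite -lee_fin -fE.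
have dl1 : dl <= 1 / 600 by rewrite -lee_fin -fE.
have [dz|dpos] := eqVneq dl 0.
  rewrite dz in fE.
  have [a [b [r [r0 sub aB]]]] := Zcase O cO aO fE.
  exists (disk a b r); split; first by exists a, b, r.
  split => //.
  by rewrite dz sqrtr0 mulr0 addr0 aB.
have dp : 0 < dl by rewrite lt_neqAle eq_sym dpos dl0.
have [a [b [r [r0 aB aY]]]] := pick O dl dl aO fE dp.
set q := Num.sqrt dl.
have q0 : 0 <= q := sqrtr_ge0 _.
have qq : q ^+ 2 = dl by rewrite sqr_sqrtr.
set T := 24 * r * q.
have T0 : 0 <= T by rewrite /T mulr_ge0 // mulr_ge0 // ltW.
have hT : 288 * r ^+ 2 * (dl + dl) <= T ^+ 2.
  by rewrite /T -qq; lra.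
have e0 : 0 <= dl + dl by lra.
have e1 : dl + dl <= 1 / 300 by lra.
have hA := A1E a b r r0 aB.
exists (disk a b (r + T)); split.
  by exists a, b, (r + T); split => //; lra.
split.
  move=> p Op; rewrite /disk /=.
  exact: (ML O a b r (dl + dl) T cO r0 aB aY e0 e1 T0 hT p Op).
rewrite area_disk; last by lra.
rewrite hA -EFinM lee_fin.
have -> : (r + T) ^+ 2 * r ^- 2 = (1 + 24 * q) ^+ 2.
  by rewrite /T; field; rewrite gt_eqF.
have q1 : q <= 1 by nra.
nra.
Qed.
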